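(* Let $n\ge 2$ and let $MAP_n^{2n-3}B$ be the set of $\lceil \log_2 n\rceil$ variables $move\text{-}L_1^{2^j-2}\text{-}L_1^{2^j-1}(2^j-1)$ for $j=1,\dots,\lceil\log_2 n\rceil$, where $L_1^0$ denotes $L^0$ (i.e. $move\text{-}L^0\text{-}L_1^1$ at step 1, $move\text{-}L_1^2\text{-}L_1^3$ at step 3, $move\text{-}L_1^6\text{-}L_1^7$ at step 7, $move\text{-}L_1^{14}\text{-}L_1^{15}$ at step 15, ...). Then $MAP_n^{2n-3}B$ is a backdoor for the CNF formula $MAP_n^{2n-3}$.
   Context: MAP planning domain. Fix $n\ge 2$. The map is an undirected graph with $3n-3$ nodes: a centre $L^0$; a path (branch 1) $L^0 - L_1^1 - \dots - L_1^{2n-3}$; and, for each $i=2,\dots,n$, a single node $L_i^1$ adjacent to $L^0$. Facts are $at\text{-}x$ and $visited\text{-}x$. For every edge $\{x,y\}$ and both orientations there is an action $move\text{-}x\text{-}y$ with precondition $\{at\text{-}x\}$, add effects $\{at\text{-}y, visited\text{-}y\}$, delete effect $\{at\text{-}x\}$. The initial state is $\{at\text{-}L^0\}$. The goal of $MAP_n^{2n-3}$ is $\{visited\text{-}L_1^{2n-3}, visited\text{-}L_2^1\}$. The CNF formula $MAP_n^{2n-3}$ is the standard Graphplan-based (Blackbox-style) SAT encoding of this task with $T=2n-2$ time steps (unsatisfiable, since a shortest plan has $2n-1$ steps). Build the Graphplan planning graph from the initial state, with a NOOP action $NOOP\text{-}p$ (precondition and add effect $\{p\}$) for each fact $p$.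 For each $t=1,\dots,T$ there is a variable $a(t)$ for every action $a$ (including NOOPs) in action layer $t$. Clauses: goal clauses $\{a(T): g\in add(a)\}$ for each goal $g$; precondition clauses $\{\neg a(t)\}\cup\{a'(t-1): p\in add(a')\}$ for each $a(t)$, $t\ge 2$, $p\in pre(a)$; mutex clauses $\{\neg a(t),\neg a'(t)\}$ for pairs of actions Graphplan marks mutually exclusive at layer $t$ (interference or competing needs); in particular any two move actions at the same step are mutually exclusive. For an unsatisfiable CNF $F$, a set $B$ of variables is a backdoor (with respect to unit propagation) if for every truth assignment to the variables in $B$, unit propagation on $F$ under that assignment derives the empty clause. *)

(* Defs.v *)
From Stdlib Require Import List Arith PeanoNat.
Import ListNotations.

(* L0 = centre L^0;  B1 k = L_1^k (branch 1, path node k);  Br i = L_i^1. *)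
Inductive node : Type := L0 | B1 (k : nat) | Br (i : nat).

Definition is_node (n : nat) (x : node) : Prop :=
  match x with
  | L0 => True
  | B1 k => 1 <= k <= 2 * n - 3
  | Br i => 2 <= i <= n
  end.

Definition edge (n : nat) (x y : node) : Prop :=
  (x = L0 /\ y = B1 1)
  \/ (exists k, 1 <= k /\ k + 1 <= 2 * n - 3 /\ x = B1 k /\ y = B1 (k + 1))
  \/ (exists i, 2 <= i <= n /\ x = L0 /\ y = Br i).

Definition adjacent (n : nat) (x y : node) : Prop := edge n x y \/ edge n y x.

Inductive fact : Type := At (x : node) | Visited (x : node).

Definition is_fact (n : nat) (p : fact) : Prop :=
  match p with At x => is_node n x | Visited x => is_node n x end.

Inductive action : Type := Move (x y : node) | Noop (p : fact).

Definition valid_action (n : nat) (a : action) : Prop :=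
  match a with
  | Move x y => adjacent n x y
  | Noop p => is_fact n p
  end.

Definition pre (a : action) : list fact :=
  match a with Move x _ => [At x] | Noop p => [p] end.
Definition add (a : action) : list fact :=
  match a with Move _ y => [At y; Visited y] | Noop p => [p] end.
Definition del (a : action) : list fact :=
  match a with Move x _ => [At x] | Noop _ => [] end.

Record layer : Type := mkLayer { lfacts : fact -> Prop; lmutex : fact -> fact -> Prop }.

Definition interferes (a b : action) : Prop :=
  exists p, In p (del a) /\ (In p (pre b) \/ In p (add b)).

Definition act_ok (n : nat) (L : layer) (a : action) : Prop :=
  valid_action n a
  /\ (forall p, In p (pre a) -> lfacts L p)
  /\ (forall p q, In p (pre a) -> In q (pre a) -> ~ lmutex L p q).

(* action mutex (interference or competing needs) in the action layer after L *)
Definition amutex_ok (n : nat) (L : layer) (a b : action) : Prop :=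
  a <> b /\ act_ok n L a /\ act_ok n L b /\
  (interferes a b \/ interferes b a
   \/ exists p q, In p (pre a) /\ In q (pre b) /\ lmutex L p q).

Definition next_facts (n : nat) (L : layer) (p : fact) : Prop :=
  exists a, act_ok n L a /\ In p (add a).

Definition next_layer (n : nat) (L : layer) : layer :=
  mkLayer (next_facts n L)
    (fun p q => p <> q /\ next_facts n L p /\ next_facts n L q /\
       forall a b, act_ok n L a -> act_ok n L b ->
         In p (add a) -> In q (add b) -> amutex_ok n L a b).

Fixpoint fact_layer (n t : nat) : layer :=
  match t with
  | 0 => mkLayer (fun p => p = At L0) (fun _ _ => False)
  | S t' => next_layer n (fact_layer n t')
  end.

Definition in_action_layer (n t : nat) (a : action) : Prop :=
  1 <= t /\ act_ok n (fact_layer n (t - 1)) a.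

Definition action_mutex (n t : nat) (a b : action) : Prop :=
  1 <= t /\ amutex_ok n (fact_layer n (t - 1)) a b.

Definition var : Type := (nat * action)%type.       (* a(t) = (t, a) *)
Definition lit : Type := (bool * var)%type.         (* (true,v) = v, (false,v) = ~v *)
Definition clause : Type := list lit.
Definition cnf : Type := clause -> Prop.

Definition neg (l : lit) : lit := (negb (fst l), snd l).

Inductive up_lit (F : cnf) (A : lit -> Prop) : lit -> Prop :=
| up_init l : A l -> up_lit F A l
| up_unit (C : clause) l : F C -> In l C ->
    (forall l', In l' C -> l' <> l -> up_lit F A (neg l')) -> up_lit F A l.

Definition up_conflict (F : cnf) (A : lit -> Prop) : Prop :=
  exists C, F C /\ forall l, In l C -> up_lit F A (neg l).

Definition is_backdoor (F : cnf) (B : list var) : Prop :=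
  forall sigma : var -> bool,
    up_conflict F (fun l => exists v, In v B /\ l = (sigma v, v)).

Definition horizon (n : nat) : nat := 2 * n - 2.
Definition goals (n : nat) : list fact := [Visited (B1 (2 * n - 3)); Visited (Br 2)].

Inductive MAP_formula (n : nat) : cnf :=
| goal_clause g (C : clause) :
    In g (goals n) ->
    (forall l, In l C <-> exists a, in_action_layer n (horizon n) a /\ In g (add a)
                                   /\ l = (true, (horizon n, a))) ->
    MAP_formula n C
| pre_clause t a p (C : clause) :
    2 <= t <= horizon n -> in_action_layer n t a -> In p (pre a) ->
    (forall l, In l C <-> l = (false, (t, a))
       \/ exists a', in_action_layer n (t - 1) a' /\ In p (add a')
                     /\ l = (true, (t - 1, a'))) ->
    MAP_formula n C
| mutex_clause t a b :
    1 <= t <= horizon n -> action_mutex n t a b ->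
    MAP_formula n [(false, (t, a)); (false, (t, b))].

Definition b1 (k : nat) : node := match k with 0 => L0 | _ => B1 k end.

Definition MAP_B (n : nat) : list var :=
  map (fun j => (2 ^ j - 1, Move (b1 (2 ^ j - 2)) (b1 (2 ^ j - 1))))
      (seq 1 (Nat.log2_up n)).

(* Main.v *)
Require Import Defs.
From Stdlib Require Import List Arith PeanoNat Lia Classical.
Import ListNotations.

Definition dist (x : node) : nat := match x with L0 => 0 | B1 k => k | Br _ => 1 end.

Lemma adj_dist n x y : adjacent n x y -> dist y <= dist x + 1 /\ dist x <= dist y + 1.
Proof.
  unfold adjacent, edge; intros [H|H];
  destruct H as [[-> ->]|[[k [? [? [-> ->]]]]|[i [? [-> ->]]]]]; simpl; lia.
Qed.

Definition rbound t p := match p with At x => dist x <= t | Visited x => dist x <= t /\ 1 <= t end.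

Lemma reach_ub n t p : lfacts (fact_layer n t) p -> rbound t p.
Proof.
  revert p; induction t; simpl; intros p H.
  - subst; simpl; lia.
  - destruct H as [a [[Hv [Hp _]] Hin]].
    destruct a as [x y|q]; simpl in *.
    + specialize (Hp (At x) (or_introl eq_refl)). apply IHt in Hp. simpl in Hp.
      destruct (adj_dist _ _ _ Hv). destruct Hin as [<-|[<-|[]]]; simpl; lia.
    + destruct Hin as [<-|[]]. specialize (Hp q (or_introl eq_refl)). apply IHt in Hp.
      destruct q; simpl in *; lia.
Qed.

Lemma At_ub n t x : lfacts (fact_layer n t) (At x) -> dist x <= t.
Proof. apply (reach_ub n t (At x)). Qed.
Lemma Vis_ub n t x : lfacts (fact_layer n t) (Visited x) -> dist x <= t /\ 1 <= t.
Proof. apply (reach_ub n t (Visited x)). Qed.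

Lemma lmutex_irrefl n t p : ~ lmutex (fact_layer n t) p p.
Proof. destruct t; simpl; tauto. Qed.

Lemma act_ok_intro n t a : valid_action n a ->
  (forall p, In p (pre a) -> lfacts (fact_layer n t) p) -> act_ok n (fact_layer n t) a.
Proof.
  intros Hv Hp. split; auto. split; auto. intros p q Hp' Hq'.
  destruct a; simpl in Hp', Hq'; destruct Hp' as [<-|[]]; destruct Hq' as [<-|[]];
  apply lmutex_irrefl.
Qed.

Lemma act_pre n L a p : act_ok n L a -> In p (pre a) -> lfacts L p.
Proof. intros [_ [H _]]; auto. Qed.

Lemma adj_b1 n k : k + 1 <= 2*n-3 -> adjacent n (b1 k) (b1 (S k)).
Proof.
  intros. left. unfold edge. destruct k; simpl. left; auto. right; left. exists (S k).
  repeat split; try lia. f_equal; lia.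
Qed.

Lemma b1_node n k : k <= 2*n-3 -> is_node n (b1 k).
Proof. destruct k; simpl; auto; lia. Qed.

Lemma dist_b1 k : dist (b1 k) = k.
Proof. destruct k; reflexivity. Qed.

Lemma reach_lb n t k : k <= t -> k <= 2*n-3 -> lfacts (fact_layer n t) (At (b1 k)).
Proof.
  revert k; induction t; intros k Hk Hm.
  - assert (k=0) by lia; subst; simpl; auto.
  - simpl. destruct (Nat.eq_dec k (S t)) as [->|Hne].
    + exists (Move (b1 t) (b1 (S t))). split; [|simpl; auto].
      apply act_ok_intro. apply adj_b1; lia.
      simpl; intros p [<-|[]]; apply IHt; lia.
    + exists (Noop (At (b1 k))). split; [|simpl; auto].
      apply act_ok_intro. simpl. apply b1_node; lia.
      simpl; intros p [<-|[]]; apply IHt; lia.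
Qed.

Lemma add_At a x : In (At x) (add a) -> (exists u, a = Move u x) \/ a = Noop (At x).
Proof.
  destruct a; simpl; intros H.
  - destruct H as [H|[H|[]]]; inversion H; subst; eauto.
  - destruct H as [H|[]]; subst; auto.
Qed.

Lemma add_Vis a x : In (Visited x) (add a) -> (exists u, a = Move u x) \/ a = Noop (Visited x).
Proof.
  destruct a; simpl; intros H.
  - destruct H as [H|[H|[]]]; inversion H; subst; eauto.
  - destruct H as [H|[]]; subst; auto.
Qed.

Lemma MA n t : forall x y, x <> y -> lfacts (fact_layer n t) (At x) ->
  lfacts (fact_layer n t) (At y) -> lmutex (fact_layer n t) (At x) (At y).
Proof.
  induction t; intros x y Hxy Hx Hy.
  - simpl in *. congruence.
  - simpl. split; [congruence|]. split; [exact Hx|]. split; [exact Hy|].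
    intros a b Ha Hb Hpa Hqb.
    destruct (add_At _ _ Hpa) as [[u ->]| ->]; destruct (add_At _ _ Hqb) as [[v ->]| ->];
    (split; [congruence|]); split; auto; split; auto.
    + destruct (classic (u = v)) as [->|Huv].
      * left. exists (At v); simpl; auto.
      * right; right. exists (At u), (At v). simpl; repeat split; auto.
        apply IHt; auto; [apply (act_pre _ _ _ _ Ha) | apply (act_pre _ _ _ _ Hb)]; simpl; auto.
    + destruct (classic (u = y)) as [->|Huv].
      * left. exists (At y); simpl; auto.
      * right; right. exists (At u), (At y). simpl; repeat split; auto.
        apply IHt; auto; [apply (act_pre _ _ _ _ Ha) | apply (act_pre _ _ _ _ Hb)]; simpl; auto.
    + destruct (classic (v = x)) as [->|Huv].
      * right; left. exists (At x); simpl; auto.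
      * right; right. exists (At x), (At v). simpl; repeat split; auto.
        apply IHt; auto; [apply (act_pre _ _ _ _ Ha) | apply (act_pre _ _ _ _ Hb)]; simpl; auto.
    + right; right. exists (At x), (At y). simpl; repeat split; auto.
      apply IHt; auto; [apply (act_pre _ _ _ _ Ha) | apply (act_pre _ _ _ _ Hb)]; simpl; auto.
Qed.

Lemma MM n t u x v y : act_ok n (fact_layer n t) (Move u x) -> act_ok n (fact_layer n t) (Move v y) ->
  Move u x <> Move v y -> amutex_ok n (fact_layer n t) (Move u x) (Move v y).
Proof.
  intros Ha Hb Hne. split; auto. split; auto. split; auto.
  destruct (classic (u = v)) as [->|Huv].
  - left. exists (At v); simpl; auto.
  - right; right. exists (At u), (At v). simpl; repeat split; auto.
    apply MA; auto; [apply (act_pre _ _ _ _ Ha) | apply (act_pre _ _ _ _ Hb)]; simpl; auto.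
Qed.

Lemma MN n t u x z : act_ok n (fact_layer n t) (Move u x) -> act_ok n (fact_layer n t) (Noop (At z)) ->
  amutex_ok n (fact_layer n t) (Move u x) (Noop (At z)).
Proof.
  intros Ha Hb. split; [congruence|]. split; auto. split; auto.
  destruct (classic (u = z)) as [->|Huv].
  - left. exists (At z); simpl; auto.
  - right; right. exists (At u), (At z). simpl; repeat split; auto.
    apply MA; auto; [apply (act_pre _ _ _ _ Ha) | apply (act_pre _ _ _ _ Hb)]; simpl; auto.
Qed.

Lemma NM n t u x z : act_ok n (fact_layer n t) (Move u x) -> act_ok n (fact_layer n t) (Noop (At z)) ->
  amutex_ok n (fact_layer n t) (Noop (At z)) (Move u x).
Proof.
  intros Ha Hb. split; [congruence|]. split; auto. split; auto.
  destruct (classic (u = z)) as [->|Huv].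
  - right; left. exists (At z); simpl; auto.
  - right; right. exists (At z), (At u). simpl; repeat split; auto.
    apply MA; auto; [apply (act_pre _ _ _ _ Hb) | apply (act_pre _ _ _ _ Ha)]; simpl; auto.
Qed.

Lemma b1_inj k k' : b1 k = b1 k' -> k = k'.
Proof. destruct k, k'; simpl; congruence. Qed.

Lemma adj_b1_inv n u k : adjacent n u (b1 k) ->
  (exists k', u = b1 k' /\ (k' + 1 = k \/ k' = k + 1)) \/ (k = 0 /\ exists i, u = Br i).
Proof.
  unfold adjacent, edge. intros [H|H];
  destruct H as [[H1 H2]|[[j [? [? [H1 H2]]]]|[i [? [H1 H2]]]]]; subst.
  - left. exists 0. destruct k as [|[|k]]; simpl in H2; try congruence. split; auto; lia.
  - left. exists j. destruct k; simpl in H2; try congruence. inversion H2.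
    destruct j; [lia|]. split; auto; lia.
  - destruct k; discriminate.
  - destruct k; [|discriminate]. left. exists 1. split; auto; lia.
  - destruct k; [discriminate|]. inversion H1; subst. left. exists (S k + 1).
    split; [|lia]. replace (S k + 1) with (S (S k)) by lia. reflexivity.
  - destruct k; [|discriminate]. right. eauto.
Qed.

Lemma adj_Br_inv n u i : adjacent n u (Br i) -> u = L0.
Proof.
  unfold adjacent, edge. intros [H|H];
  destruct H as [[H1 H2]|[[j [? [? [H1 H2]]]]|[i' [? [H1 H2]]]]]; subst; congruence.
Qed.

Lemma MV n t : forall k, lfacts (fact_layer n t) (At (b1 k)) ->
  lfacts (fact_layer n t) (Visited (Br 2)) -> t < k + 2 ->
  lmutex (fact_layer n t) (At (b1 k)) (Visited (Br 2)).
Proof.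
  induction t; intros k Hx Hy Ht.
  - simpl in *. discriminate.
  - simpl. split; [congruence|]. split; [exact Hx|]. split; [exact Hy|].
    intros a b Ha Hb Hpa Hqb.
    destruct (add_Vis _ _ Hqb) as [[v ->]| ->].
    + assert (v = L0) as -> by (apply (adj_Br_inv n v 2), Hb).
      destruct (add_At _ _ Hpa) as [[u ->]| ->].
      * apply MM; auto. intro H; inversion H. destruct k; discriminate.
      * apply NM; auto.
    + split; [destruct (add_At _ _ Hpa) as [[u ->]| ->]; congruence|]. split; auto. split; auto.
      right; right.
      destruct (add_At _ _ Hpa) as [[u ->]| ->].
      * exists (At u), (Visited (Br 2)). simpl; repeat split; auto.
        assert (Hu : lfacts (fact_layer n t) (At u)) by (apply (act_pre _ _ _ _ Ha); simpl; auto).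
        destruct (adj_b1_inv n u k (proj1 Ha)) as [[k' [-> Hk']]|[-> [i ->]]].
        -- apply IHt; auto. apply (act_pre _ _ _ _ Hb); simpl; auto. lia.
        -- apply At_ub in Hu. simpl in Hu. lia.
      * exists (At (b1 k)), (Visited (Br 2)). simpl; repeat split; auto.
        apply IHt; auto; [apply (act_pre _ _ _ _ Ha) | apply (act_pre _ _ _ _ Hb) | ]; simpl; auto; lia.
Qed.

Lemma filter_ex {A} (P : A -> Prop) (l : list A) : exists l', forall x, In x l' <-> In x l /\ P x.
Proof.
  induction l as [|a l [l' IH]].
  - exists []; simpl; tauto.
  - destruct (classic (P a)).
    + exists (a :: l'); intros x; simpl; rewrite IH. split.
      * intros [<-|[]]; auto.
      * intros [[<-|]]; auto.
    + exists l'; intros x; simpl; rewrite IH. split.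
      * intros []; auto.
      * intros [[<-|]]; tauto.
Qed.

Definition U n : list node := L0 :: map B1 (seq 0 (2*n+2)) ++ map Br (seq 0 (n+1)).

Lemma adj_U n u y : adjacent n u y -> In u (U n).
Proof.
  unfold adjacent, edge, U. intros [H|H];
  destruct H as [[H1 H2]|[[j [? [? [H1 H2]]]]|[i' [? [H1 H2]]]]]; subst; simpl; auto;
  right; apply in_or_app;
  first [ left; apply in_map; apply in_seq; lia | right; apply in_map; apply in_seq; lia ].
Qed.

Definition nd (p : Defs.fact) := match p with At x => x | Visited x => x end.
Definition cand n p := Noop p :: map (fun u => Move u (nd p)) (U n).

Lemma cand_ok n a p : valid_action n a -> In p (add a) -> In a (cand n p).
Proof.
  destruct a as [u y|q]; intros Hv Hin; unfold cand.
  - right. simpl in Hin. destruct Hin as [<-|[<-|[]]]; simpl nd;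
    apply (in_map (fun u => Move u y)); eapply adj_U; eauto.
  - left. destruct Hin as [<-|[]]; auto.
Qed.

Lemma adders_ex n t p : exists la, forall a, In a la <-> in_action_layer n t a /\ In p (add a).
Proof.
  destruct (filter_ex (fun a => in_action_layer n t a /\ In p (add a)) (cand n p)) as [l H].
  exists l. intros a. rewrite H. split; [tauto|]. intros [H1 H2]. split; auto.
  apply (cand_ok n); auto. apply H1.
Qed.

Notation up n A := (up_lit (MAP_formula n) A).

Lemma kill_pre (n : nat) (A : lit -> Prop) t a p : 2 <= t <= horizon n -> in_action_layer n t a -> In p (pre a) ->
  (forall a', in_action_layer n (t-1) a' -> In p (add a') -> up n A (false,(t-1,a'))) ->
  up n A (false,(t,a)).
Proof.
  intros Ht Ha Hp Hk. destruct (adders_ex n (t-1) p) as [la Hla].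
  set (C := (false,(t,a)) :: map (fun a' => (true,(t-1,a'))) la).
  assert (Hiff : forall l, In l C <-> l = (false,(t,a)) \/ exists a', in_action_layer n (t-1) a'
     /\ In p (add a') /\ l = (true,(t-1,a'))).
  { intros l. unfold C. simpl. rewrite in_map_iff. split.
    - intros [<-|[a' [<- H]]]; auto. right. apply Hla in H. exists a'; tauto.
    - intros [<-|[a' [H1 [H2 ->]]]]; auto. right. exists a'. split; auto. apply Hla; auto. }
  apply (up_unit _ _ C).
  - eapply pre_clause; eauto.
  - apply Hiff; auto.
  - intros l' Hl' Hne. apply Hiff in Hl'. destruct Hl' as [->|[a' [H1 [H2 ->]]]]. congruence.
    cbv [neg negb fst snd]; auto.
Qed.

Lemma force_pre (n : nat) (A : lit -> Prop) t a p b : 2 <= t <= horizon n -> in_action_layer n t a -> In p (pre a) ->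
  up n A (true,(t,a)) -> in_action_layer n (t-1) b -> In p (add b) ->
  (forall a', in_action_layer n (t-1) a' -> In p (add a') -> a' <> b -> up n A (false,(t-1,a'))) ->
  up n A (true,(t-1,b)).
Proof.
  intros Ht Ha Hp Hup Hb Hpb Hk. destruct (adders_ex n (t-1) p) as [la Hla].
  set (C := (false,(t,a)) :: map (fun a' => (true,(t-1,a'))) la).
  assert (Hiff : forall l, In l C <-> l = (false,(t,a)) \/ exists a', in_action_layer n (t-1) a'
     /\ In p (add a') /\ l = (true,(t-1,a'))).
  { intros l. unfold C. simpl. rewrite in_map_iff. split.
    - intros [<-|[a' [<- H]]]; auto. right. apply Hla in H. exists a'; tauto.
    - intros [<-|[a' [H1 [H2 ->]]]]; auto. right. exists a'. split; auto. apply Hla; auto. }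
  apply (up_unit _ _ C).
  - eapply pre_clause; eauto.
  - apply Hiff; right; eauto.
  - intros l' Hl' Hne. apply Hiff in Hl'. destruct Hl' as [->|[a' [H1 [H2 ->]]]].
    + cbv [neg negb fst snd]; auto.
    + cbv [neg negb fst snd]. apply Hk; auto. intros ->; auto.
Qed.

Lemma kill_mutex (n : nat) (A : lit -> Prop) t a b : 1 <= t <= horizon n -> action_mutex n t a b -> up n A (true,(t,a)) ->
  up n A (false,(t,b)).
Proof.
  intros Ht Hm Hu. apply (up_unit _ _ [(false,(t,a));(false,(t,b))]).
  - apply mutex_clause; auto.
  - simpl; auto.
  - intros l' [<-|[<-|[]]] Hne; [cbv [neg negb fst snd]; auto | congruence].
Qed.

Lemma goal_ex (n : nat) (A : lit -> Prop) g : In g (goals n) -> exists C, MAP_formula n C /\ forall l, In l C <-> exists a,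
  in_action_layer n (horizon n) a /\ In g (add a) /\ l = (true, (horizon n, a)).
Proof.
  intros Hg. destruct (adders_ex n (horizon n) g) as [la Hla].
  exists (map (fun a' => (true,(horizon n,a'))) la).
  assert (Hiff : forall l, In l (map (fun a' => (true,(horizon n,a'))) la) <-> exists a,
    in_action_layer n (horizon n) a /\ In g (add a) /\ l = (true, (horizon n, a))).
  { intros l. rewrite in_map_iff. split.
    - intros [a' [<- H]]. apply Hla in H. exists a'; tauto.
    - intros [a' [H1 [H2 ->]]]. exists a'. split; auto. apply Hla; auto. }
  split; auto. eapply goal_clause; eauto.
Qed.

Lemma force_goal (n : nat) (A : lit -> Prop) g b : In g (goals n) -> in_action_layer n (horizon n) b -> In g (add b) ->
  (forall a', in_action_layer n (horizon n) a' -> In g (add a') -> a' <> b ->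
     up n A (false,(horizon n,a'))) -> up n A (true,(horizon n,b)).
Proof.
  intros Hg Hb Hgb Hk. destruct (goal_ex n A g Hg) as [C [HC Hiff]].
  apply (up_unit _ _ C); auto.
  - apply Hiff; eauto.
  - intros l' Hl' Hne. apply Hiff in Hl'. destruct Hl' as [a' [H1 [H2 ->]]].
    cbv [neg negb fst snd]. apply Hk; auto. intros ->; auto.
Qed.

Lemma conflict_goal (n : nat) (A : lit -> Prop) g : In g (goals n) ->
  (forall a', in_action_layer n (horizon n) a' -> In g (add a') -> up n A (false,(horizon n,a'))) ->
  up_conflict (MAP_formula n) A.
Proof.
  intros Hg Hk. destruct (goal_ex n A g Hg) as [C [HC Hiff]]. exists C. split; auto.
  intros l Hl. apply Hiff in Hl. destruct Hl as [a' [H1 [H2 ->]]]. cbv [neg negb fst snd]; auto.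
Qed.


Definition OT k := Move (b1 (k-1)) (b1 k).

Lemma inl_OT n k t : 1 <= k <= t -> k <= 2*n-3 -> in_action_layer n t (OT k).
Proof.
  intros Hk Hm. split; [lia|]. apply act_ok_intro.
  - simpl. replace (b1 k) with (b1 (S (k-1))) by (f_equal; lia). apply adj_b1; lia.
  - simpl. intros p [<-|[]]. apply reach_lb; lia.
Qed.

Lemma mutex_MM n t u x v y : in_action_layer n t (Move u x) -> in_action_layer n t (Move v y) ->
  Move u x <> Move v y -> action_mutex n t (Move u x) (Move v y).
Proof. intros [H1 H2] [_ H3] H; split; auto. apply MM; auto. Qed.

Lemma mutex_MN n t u x z : in_action_layer n t (Move u x) -> in_action_layer n t (Noop (At z)) ->
  action_mutex n t (Move u x) (Noop (At z)).
Proof. intros [H1 H2] [_ H3]; split; auto. apply MN; auto. Qed.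

Lemma U1 n k a : 1 <= k -> in_action_layer n k a ->
  In (At (b1 k)) (add a) \/ In (Visited (b1 k)) (add a) -> a = OT k.
Proof.
  intros Hk [_ Ha] Hin.
  assert (Hx : (exists u, a = Move u (b1 k)) \/ a = Noop (At (b1 k)) \/ a = Noop (Visited (b1 k))).
  { destruct Hin as [H|H]; [destruct (add_At _ _ H)|destruct (add_Vis _ _ H)]; tauto. }
  destruct Hx as [[u ->]|[->| ->]].
  - assert (Hu := act_pre _ _ _ (At u) Ha (or_introl eq_refl)). apply At_ub in Hu.
    destruct (adj_b1_inv n u k (proj1 Ha)) as [[k' [-> Hk']]|[? _]]; [|lia].
    rewrite dist_b1 in Hu. unfold OT. do 2 f_equal; lia.
  - assert (Hu := act_pre _ _ _ _ Ha (or_introl eq_refl)). apply At_ub in Hu.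
    rewrite dist_b1 in Hu. lia.
  - assert (Hu := act_pre _ _ _ _ Ha (or_introl eq_refl)). apply Vis_ub in Hu.
    rewrite dist_b1 in Hu. lia.
Qed.

Lemma U3 n j a : 1 <= j -> in_action_layer n (j+1) a ->
  In (At (b1 j)) (add a) \/ In (Visited (b1 j)) (add a) ->
  a = OT j \/ a = Noop (At (b1 j)) \/ a = Noop (Visited (b1 j)).
Proof.
  intros Hk [_ Ha] Hin. replace (j+1-1) with j in Ha by lia.
  assert (Hx : (exists u, a = Move u (b1 j)) \/ a = Noop (At (b1 j)) \/ a = Noop (Visited (b1 j))).
  { destruct Hin as [H|H]; [destruct (add_At _ _ H)|destruct (add_Vis _ _ H)]; tauto. }
  destruct Hx as [[u ->]|[->| ->]]; auto. left.
  assert (Hu := act_pre _ _ _ (At u) Ha (or_introl eq_refl)). apply At_ub in Hu.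
  destruct (adj_b1_inv n u j (proj1 Ha)) as [[k' [-> Hk']]|[? _]]; [|lia].
  rewrite dist_b1 in Hu. unfold OT. do 2 f_equal; lia.
Qed.

Lemma U5 n t a : in_action_layer n t a -> In (Visited (Br 2)) (add a) ->
  a = Move L0 (Br 2) \/ a = Noop (Visited (Br 2)).
Proof.
  intros [_ Ha] Hin. destruct (add_Vis _ _ Hin) as [[u ->]| ->]; auto.
  left. rewrite (adj_Br_inv n u 2 (proj1 Ha)); auto.
Qed.

Definition killedVis n A t := forall a, in_action_layer n t a -> In (Visited (Br 2)) (add a) ->
  up_lit (MAP_formula n) A (false,(t,a)).

Lemma vis_chain n A t0 : 1 <= t0 ->
  (forall t, t0 <= t <= horizon n -> in_action_layer n t (Move L0 (Br 2)) ->
     up_lit (MAP_formula n) A (false,(t,Move L0 (Br 2)))) ->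
  killedVis n A t0 -> forall t, t0 <= t <= horizon n -> killedVis n A t.
Proof.
  intros Ht0 Hm Hk0. assert (forall d, t0 + d <= horizon n -> killedVis n A (t0 + d)).
  { induction d; intros Hd. rewrite Nat.add_0_r; auto.
    intros a Ha Hin. destruct (U5 _ _ _ Ha Hin) as [->| ->].
    - apply Hm; auto; lia.
    - apply (kill_pre n A _ _ (Visited (Br 2))); auto; try lia. simpl; auto.
      replace (t0 + S d - 1) with (t0 + d) by lia. apply IHd; lia. }
  intros t Ht. replace t with (t0 + (t - t0)) by lia. apply H; lia.
Qed.

Definition dd s x := match x with L0 => s | B1 k => (k - s) + (s - k) | Br _ => S s end.

Lemma adj_dd n s x y : 1 <= s -> adjacent n x y -> dd s y <= dd s x + 1.
Proof.
  unfold adjacent, edge; intros Hs [H|H];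
  destruct H as [[-> ->]|[[k [? [? [-> ->]]]]|[i [? [-> ->]]]]]; simpl; try lia; destruct s; lia.
Qed.

Lemma goal1 n : 2 <= n -> In (Visited (b1 (2*n-3))) (goals n).
Proof. intros. unfold goals. left. destruct (2*n-3) eqn:E; [lia|]. reflexivity. Qed.
Lemma goal2 n : In (Visited (Br 2)) (goals n).
Proof. simpl; auto. Qed.

Lemma In1 {X} (x y : X) : x = y -> In x [y].
Proof. intros ->; simpl; auto. Qed.

Lemma case_true n A s : 2 <= n -> 1 <= s -> n - 1 <= s -> s <= 2*n-3 ->
  up_lit (MAP_formula n) A (true,(s,OT s)) -> up_conflict (MAP_formula n) A.
Proof.
  intros Hn Hs1 Hs2 Hs3 HA.
  assert (T1 : forall k, 1 <= k <= s -> up_lit (MAP_formula n) A (true,(k,OT k))).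
  { assert (forall d, d <= s - 1 -> up_lit (MAP_formula n) A (true,(s-d,OT (s-d)))).
    { induction d; intros Hd. replace (s-0) with s by lia; auto.
      replace (s - S d) with (s - d - 1) by lia.
      apply (force_pre n A (s-d) (OT (s-d)) (At (b1 (s-d-1)))).
      - unfold horizon; lia.
      - apply inl_OT; lia.
      - apply In1; reflexivity.
      - apply IHd; lia.
      - apply inl_OT; lia.
      - simpl; auto.
      - intros a' H1 H2 H3. exfalso. apply H3. apply (U1 n); auto; lia. }
    intros k Hk. replace k with (s - (s-k)) by lia. apply H; lia. }
  assert (T2 : forall d, s + d <= 2*n-3 -> forall x, d < dd s x -> forall a,
     in_action_layer n (s+d) a -> In (At x) (add a) -> up_lit (MAP_formula n) A (false,(s+d,a))).
  { induction d; intros Hd x Hx a Ha Hin.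
    - rewrite Nat.add_0_r in *.
      destruct (add_At _ _ Hin) as [[u ->]| ->].
      + apply (kill_mutex n A s (OT s)); auto. unfold horizon; lia.
        apply mutex_MM; auto. apply inl_OT; lia.
        intro E. injection E as E1 E2. subst x. destruct s; [lia|]. simpl in Hx. lia.
      + apply (kill_mutex n A s (OT s)); auto. unfold horizon; lia.
        apply mutex_MN; auto. apply inl_OT; lia.
    - replace (s + S d) with (S (s + d)) in * by lia.
      destruct (add_At _ _ Hin) as [[u ->]| ->].
      + apply (kill_pre n A _ _ (At u)); auto. unfold horizon; lia. simpl; auto.
        try rewrite Nat.sub_0_r; try replace (S (s+d) - 1) with (s+d) by lia.
        apply (IHd ltac:(lia) u); auto.
        destruct Ha as [_ Ha]. pose proof (adj_dd n s u x Hs1 (proj1 Ha)). lia.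
      + apply (kill_pre n A _ _ (At x)); auto. unfold horizon; lia. simpl; auto.
        try rewrite Nat.sub_0_r; try replace (S (s+d) - 1) with (s+d) by lia.
        apply (IHd ltac:(lia) x); auto. lia. }
  assert (T3 : forall t, 1 <= t <= horizon n -> in_action_layer n t (Move L0 (Br 2)) ->
     up_lit (MAP_formula n) A (false,(t,Move L0 (Br 2)))).
  { intros t Ht Hl. destruct (le_lt_dec t s).
    - apply (kill_mutex n A t (OT t)); auto. 
      apply mutex_MM; auto. apply inl_OT; lia.
      intro E. injection E as E1 E2. destruct t; discriminate.
      apply T1; lia.
    - apply (kill_pre n A _ _ (At L0)); auto. unfold horizon in *; lia. simpl; auto.
      intros a' H1 H2. replace (t-1) with (s + (t-1-s)) in * by lia.
      apply (T2 (t-1-s) ltac:(unfold horizon in *; lia) L0); auto. simpl. unfold horizon in *. lia. }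
  assert (T4 : killedVis n A 1).
  { intros a Ha Hin. destruct (U5 _ _ _ Ha Hin) as [->| ->].
    - apply T3; auto. unfold horizon; lia.
    - exfalso. destruct Ha as [_ Ha]. assert (H := act_pre _ _ _ _ Ha (or_introl eq_refl)).
      apply Vis_ub in H. lia. }
  apply (conflict_goal n A _ (goal2 n)).
  apply (vis_chain n A 1); auto. unfold horizon; lia.
Qed.

Lemma case_false n A s : 2 <= n -> 1 <= s -> s <= 2*n-3 ->
  up_lit (MAP_formula n) A (false,(s,OT s)) -> up_conflict (MAP_formula n) A.
Proof.
  intros Hn Hs1 Hs3 HA. set (m := 2*n-3).
  assert (Hh : horizon n = m + 1) by (unfold horizon, m; lia).
  assert (F1 : forall d, s + d <= m -> up_lit (MAP_formula n) A (false,(s+d,OT (s+d)))).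
  { induction d; intros Hd. rewrite Nat.add_0_r; auto.
    replace (s + S d) with (S (s+d)) by lia.
    apply (kill_pre n A _ _ (At (b1 (s+d)))).
    - lia.
    - apply inl_OT; lia.
    - apply In1. unfold OT. do 2 f_equal. lia.
    - intros a' H1 H2. replace (S (s+d) - 1) with (s+d) in * by lia.
      rewrite (U1 n (s+d) a'); auto; try lia. apply IHd; lia. }
  assert (F1' : forall k, s <= k <= m -> up_lit (MAP_formula n) A (false,(k,OT k))).
  { intros k Hk. replace k with (s + (k-s)) by lia. apply F1; lia. }
  assert (F2 : in_action_layer n (horizon n) (Noop (Visited (b1 m))) ->
     up_lit (MAP_formula n) A (false,(horizon n,Noop (Visited (b1 m))))).
  { intros Hl. apply (kill_pre n A _ _ (Visited (b1 m))); auto. lia. simpl; auto.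
    intros a' H1 H2. rewrite Hh in *. replace (m+1-1) with m in * by lia.
    rewrite (U1 n m a'); auto; try lia; try (apply F1'; lia). }
  assert (F3 : up_lit (MAP_formula n) A (true,(m+1,OT m))).
  { rewrite <- Hh. apply (force_goal n A (Visited (b1 m))).
    - apply goal1; auto.
    - apply inl_OT; lia.
    - simpl; auto.
    - intros a' H1 H2 H3. rewrite Hh in H1.
      destruct (U3 n m a') as [->|[->| ->]]; auto; try lia; try congruence.
      + simpl in H2. destruct H2 as [H2|[]]. discriminate.
      + apply F2. rewrite Hh; auto. }
  assert (F4 : forall d, d <= m - s -> up_lit (MAP_formula n) A (true,(m-d+1,OT (m-d)))).
  { induction d; intros Hd. replace (m-0) with m by lia; auto.
    replace (m - S d + 1) with (m - d + 1 - 1) by lia.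
    replace (m - S d) with (m - d - 1) by lia.
    apply (force_pre n A _ (OT (m-d)) (At (b1 (m-d-1)))).
    - lia.
    - apply inl_OT; lia.
    - apply In1. reflexivity.
    - apply IHd; lia.
    - apply inl_OT; lia.
    - simpl; auto.
    - intros a' H1 H2 H3. replace (m-d+1-1) with (m-d-1+1) in H1 by lia.
      destruct (U3 n (m-d-1) a') as [->|[->| ->]]; auto; try lia; try congruence.
      + replace (m-d+1-1) with (S (m-d-1)) by lia.
        apply (kill_pre n A _ _ (At (b1 (m-d-1)))); auto. lia. replace (S (m-d-1)) with (m-d-1+1) by lia; auto.
        simpl; auto.
        intros a'' H4 H5. try rewrite Nat.sub_0_r in *; try replace (S (m-d-1) - 1) with (m-d-1) in * by lia.
        rewrite (U1 n (m-d-1) a''); auto; try lia; try (apply F1'; lia).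
      + simpl in H2. destruct H2 as [H2|[]]. discriminate. }
  assert (F4' : forall t, s+1 <= t <= m+1 -> up_lit (MAP_formula n) A (true,(t,OT (t-1)))).
  { intros t Ht. assert (H := F4 (m - (t-1)) ltac:(lia)).
    replace (m - (m-(t-1))) with (t-1) in H by lia. replace (t-1+1) with t in H by lia. exact H. }
  assert (F5 : killedVis n A (s+1)).
  { intros a Ha Hin. destruct (U5 _ _ _ Ha Hin) as [->| ->].
    - apply (kill_mutex n A _ (OT s)). lia.
      apply mutex_MM; auto. apply inl_OT; lia.
      intro E. injection E as E1 E2. destruct s; discriminate.
      replace s with (s+1-1) at 2 by lia. apply F4'; lia.
    - apply (kill_mutex n A _ (OT s)). lia.
      2:{ replace s with (s+1-1) at 2 by lia. apply F4'; lia. }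
      assert (Ho := inl_OT n s (s+1) ltac:(lia) ltac:(lia)).
      destruct Ho as [_ Ho]. destruct Ha as [_ Ha].
      split; [lia|]. split; [discriminate|]. split; auto. split; auto.
      right; right. exists (At (b1 (s-1))), (Visited (Br 2)). split; [simpl; auto|].
      split; [simpl; auto|].
      replace (s+1-1) with s in * by lia.
      apply MV; [apply (act_pre _ _ _ _ Ho) | apply (act_pre _ _ _ _ Ha) |]; simpl; auto; lia. }
  apply (conflict_goal n A _ (goal2 n)).
  apply (vis_chain n A (s+1)); auto; try lia.
  intros t Ht Hl. apply (kill_mutex n A _ (OT (t-1))). lia.
  apply mutex_MM; auto. apply inl_OT; lia.
  intro E. injection E as E1 E2. destruct t as [|[|t]]; try lia; simpl in E2; discriminate.
  apply F4'; lia.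
Qed.

Theorem theorem9 (n : nat) (hn : 2 <= n) : is_backdoor (MAP_formula n) (MAP_B n).
Proof.
  intros sigma. set (J := Nat.log2_up n).
  assert (HJ : 0 < J) by (apply Nat.log2_up_pos; lia).
  assert (Hsp := Nat.log2_up_spec n ltac:(lia)). fold J in Hsp.
  assert (E : 2 ^ J = 2 * 2 ^ Nat.pred J).
  { replace J with (S (Nat.pred J)) at 1 by lia. reflexivity. }
  set (s := 2 ^ J - 1).
  set (v := (s, OT s)).
  assert (Hv : In v (MAP_B n)).
  { unfold MAP_B. apply in_map_iff. exists J. split.
    - unfold v, s, OT. replace (2^J-1-1) with (2^J-2) by lia. reflexivity.
    - apply in_seq. fold J. lia. }
  assert (HA : up_lit (MAP_formula n) (fun l => exists v, In v (MAP_B n) /\ l = (sigma v, v)) (sigma v, v)).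
  { apply up_init. exists v; auto. }
  destruct (sigma v) eqn:Es.
  - apply (case_true n _ s); auto; unfold s; lia.
  - apply (case_false n _ s); auto; unfold s; lia.
Qed.
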